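(* Let $G$ be a finite group, $A_0=\operatorname{Aut}(G)$, and let $S_0$ be an $\mathcal{L}(A_0)$-system over $G$ in the variables $Y=\{y_{ij}\mid i\in\mathbb{Z},1\le j\le n\}$. Then for every finite $Z\subseteq Y$ there exists a finite subsystem $S_1\subseteq S_0$ which is $Z$-equivalent to $S_0$.
   Context: $\mathcal{L}(A_0)$ is the group language $\{\cdot,{}^{-1},1\}$ with a unary function symbol for each $\phi\in A_0$, interpreted as $\phi$; an $\mathcal{L}(A_0)$-equation in $Y$ is $t=1$ for a term $t$ involving finitely many variables of $Y$, a system is any set of such equations, and its solution set $V_G(S)$ consists of the points $(p_{ij}\mid i\in\mathbb{Z},1\le j\le n)\in G^{Y}$ satisfying all its equations. Two systems $S_0,S_1$ in variables $Y$ are $Z$-equivalent ($Z\subseteq Y$) if the projections of $V_G(S_0)$ and $V_G(S_1)$ onto the coordinates in $Z$ coincide. *)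

(* Defs.v *)
From HB Require Import structures.
From mathcomp Require Import all_boot all_order all_algebra all_fingroup.
Set Implicit Arguments. Unset Strict Implicit. Unset Printing Implicit Defensive.

(* Variables Y = { y_ij | i in Z, 1 <= j <= n }, encoded as int * 'I_n
   (the index j is shifted to 0 <= j < n). *)
Definition var (n : nat) : Type := (int * 'I_n)%type.

Definition autsym (gT : finGroupType) : Type :=
  {phi : {perm gT} | phi \in Aut [set: gT]}.

Inductive term (gT : finGroupType) (n : nat) : Type :=
  | TVar of var n
  | TOne
  | TMul of term gT n & term gT n
  | TInv of term gT n
  | TApp of autsym gT & term gT n.

Fixpoint eval_term (gT : finGroupType) (n : nat) (p : var n -> gT)
    (t : term gT n) : gT :=
  match t with
  | TVar y => p y
  | TOne => 1%g
  | TMul t1 t2 => (eval_term p t1 * eval_term p t2)%g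
  | TInv t1 => ((eval_term p t1)^-1)%g
  | TApp phi t1 => (sval phi) (eval_term p t1)
  end.

(* An equation t = 1 is represented by its term t; a system is a set of terms. *)
Definition system (gT : finGroupType) (n : nat) := term gT n -> Prop.

Definition solutions (gT : finGroupType) (n : nat) (S : system gT n)
    : (var n -> gT) -> Prop :=
  fun p => forall t, S t -> eval_term p t = 1%g.

Definition Z_equivalent (gT : finGroupType) (n : nat) (Z : var n -> Prop)
    (S0 S1 : system gT n) : Prop :=
  forall q : var n -> gT,
    (exists2 p, solutions S0 p & forall z, Z z -> p z = q z) <->
    (exists2 p, solutions S1 p & forall z, Z z -> p z = q z).

(* Propositional membership in a finite list (terms have no eqType here). *)
Fixpoint inseq (T : Type) (x : T) (s : seq T) : Prop :=
  match s with
  | [::] => False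
  | y :: s' => y = x \/ inseq x s'
  end.

(* Main.v *)
Require Import Defs.
From mathcomp Require Import all_boot all_order all_algebra all_fingroup.
From Stdlib Require Import Classical ClassicalEpsilon.

Set Implicit Arguments. Unset Strict Implicit.

Lemma inseq_mem (T : eqType) (x : T) s : inseq x s <-> x \in s.
Proof.
elim: s => [|y s IH] /=; first by split.
rewrite in_cons; split.
  by case=> [->|/IH ->]; rewrite ?eqxx ?orbT.
by case/orP=> [/eqP ->|/IH]; [left|right].
Qed.

Lemma inseq_cat T (x : T) s1 s2 : inseq x (s1 ++ s2) <-> inseq x s1 \/ inseq x s2.
Proof.
elim: s1 => [|y s IH] /=; first by intuition.
rewrite IH; intuition.
Qed.

Lemma agree_map (A B : Type) (p q : A -> B) Z :
  (forall z, inseq z Z -> p z = q z) <-> map p Z = map q Z.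
Proof.
elim: Z => [|y s IH] /=; first by split.
split.
  by move=> H; rewrite H; [congr cons; apply/IH => z Hz; apply: H; right|left].
by case=> E /IH H z [<-|/H].
Qed.

Fixpoint vars (gT : finGroupType) n (t : term gT n) : seq (var n) :=
  match t with
  | TVar y => [:: y]
  | TOne => [::]
  | TMul t1 t2 => vars t1 ++ vars t2
  | TInv t1 => vars t1
  | TApp _ t1 => vars t1
  end.

Lemma eval_ext (gT : finGroupType) n (t : term gT n) (p p' : var n -> gT) :
  (forall v, v \in vars t -> p v = p' v) -> eval_term p t = eval_term p' t.
Proof.
elim: t => [y|| t1 IH1 t2 IH2| t1 IH1| phi t1 IH1] /= H.
- by apply: H; rewrite inE.
- by [].
- by rewrite IH1 ?IH2 // => v Hv; apply: H; rewrite mem_cat Hv ?orbT.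
- by rewrite IH1.
- by rewrite IH1.
Qed.

Definition bnd n (s : seq (var n)) : nat := foldr (fun v m => maxn (pickle v).+1 m) 0 s.

Lemma bndP n (s : seq (var n)) v : v \in s -> pickle v < bnd s.
Proof.
elim: s => [|y s IH] //=; rewrite in_cons => /orP [/eqP ->|/IH H].
  by rewrite leq_max leqnn.
by rewrite leq_max H orbT.
Qed.

Definition good (gT : finGroupType) n (S0 : system gT n) (Z : seq (var n))
  (w : seq gT) (k : nat) (f : var n -> gT) : Prop :=
  forall F : seq (term gT n), (forall t, inseq t F -> S0 t) ->
    exists p, solutions (fun t => inseq t F) p /\ map p Z = w /\
      forall v, pickle v < k -> p v = f v.

Lemma sol_cat (gT : finGroupType) n (F1 F2 : seq (term gT n)) p :
  solutions (fun t => inseq t (F1 ++ F2)) p ->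
  solutions (fun t => inseq t F1) p /\ solutions (fun t => inseq t F2) p.
Proof.
move=> H; split=> t Ht; apply: H; apply/inseq_cat; tauto.
Qed.

Lemma step (gT : finGroupType) n (S0 : system gT n) Z w k f :
  good S0 Z w k f -> exists f', good S0 Z w k.+1 f' /\
     forall v, pickle v < k -> f' v = f v.
Proof.
move=> Hg.
case: (classic (exists v : var n, pickle v = k)) => [[v Hv]|Hno]; last first.
  exists f; split=> // F HF; have [p [Hp [Hw Hpre]]] := Hg F HF.
  exists p; split=> //; split=> // u Hu; apply: Hpre.
  rewrite ltnS leq_eqVlt in Hu; case/orP: Hu => // /eqP Hu.
  by exfalso; apply: Hno; exists u.
pose fg (g : gT) := fun u => if u == v then g else f u.
suff [g Hgood] : exists g, good S0 Z w k.+1 (fg g).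
  exists (fg g); split=> // u Hu; rewrite /fg.
  case: eqP => // E; subst u; by rewrite Hv ltnn in Hu.
apply: NNPP => Hnot.
have Hbad : forall g, exists F, (forall t, inseq t F -> S0 t) /\
   forall p, solutions (fun t => inseq t F) p -> map p Z = w ->
     ~ (forall u, pickle u < k.+1 -> p u = fg g u).
  move=> g; apply: NNPP => H1; apply: Hnot; exists g => F HF.
  apply: NNPP => H2; apply: H1; exists F; split=> // p Hp Hw Hpre.
  by apply: H2; exists p.
have Hall : forall l : seq gT, exists F, (forall t, inseq t F -> S0 t) /\
   forall g, g \in l -> forall p, solutions (fun t => inseq t F) p -> map p Z = w ->
     ~ (forall u, pickle u < k.+1 -> p u = fg g u).
  elim=> [|g l [F [HF HFb]]].
    by exists [::]; split.
  have [F1 [HF1 HF1b]] := Hbad g.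
  exists (F1 ++ F); split.
    by move=> t /inseq_cat [/HF1|/HF].
  move=> g'; rewrite in_cons => /orP [/eqP ->|Hg'] p /sol_cat [Hp1 Hp2] Hw.
    exact: HF1b.
  exact: HFb.
have [F [HF HFb]] := Hall (enum gT).
have [p [Hp [Hw Hpre]]] := Hg F HF.
apply: (HFb (p v) _ p Hp Hw); first by rewrite mem_enum.
move=> u Hu; rewrite /fg; case: eqP => [->//|Ne].
apply: Hpre; rewrite ltnS leq_eqVlt in Hu; case/orP: Hu => // /eqP Hu.
by exfalso; apply: Ne; apply: (pcan_inj (@pickleK _)); rewrite Hu Hv.
Qed.

Definition next (gT : finGroupType) n (S0 : system gT n) Z w k (f : var n -> gT) :=
  epsilon (inhabits f) (fun f' => good S0 Z w k.+1 f' /\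
     forall v, pickle v < k -> f' v = f v).

Fixpoint seqf (gT : finGroupType) n (S0 : system gT n) Z w (k : nat) : var n -> gT :=
  match k with
  | 0 => fun _ => 1%g
  | k'.+1 => next S0 Z w k' (seqf S0 Z w k')
  end.

Lemma seqf_spec (gT : finGroupType) n (S0 : system gT n) Z w :
  good S0 Z w 0 (fun _ => 1%g) ->
  forall k, good S0 Z w k (seqf S0 Z w k) /\
    forall v, pickle v < k -> seqf S0 Z w k.+1 v = seqf S0 Z w k v.
Proof.
move=> H0; elim=> [|k [IHg _]].
  split=> //= v; rewrite ltn0 //.
have E := epsilon_spec (inhabits (seqf S0 Z w k)) _ (step IHg).
have Hg : good S0 Z w k.+1 (seqf S0 Z w k.+1) by case: E.
split=> // v Hv.
have E2 := epsilon_spec (inhabits (seqf S0 Z w k.+1)) _ (step Hg).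
by case: E2 => _ H; apply: H.
Qed.

Lemma seqf_agree (gT : finGroupType) n (S0 : system gT n) Z w :
  good S0 Z w 0 (fun _ => 1%g) ->
  forall k d v, pickle v < k -> seqf S0 Z w (k + d) v = seqf S0 Z w k v.
Proof.
move=> H0 k d v Hv; elim: d => [|d IH]; first by rewrite addn0.
rewrite addnS; have [_ ->] := seqf_spec H0 (k + d); first exact: IH.
exact: leq_trans Hv (leq_addr _ _).
Qed.

Lemma compact (gT : finGroupType) n (S0 : system gT n) Z w :
  (forall F : seq (term gT n), (forall t, inseq t F -> S0 t) ->
     exists p, solutions (fun t => inseq t F) p /\ map p Z = w) ->
  exists p, solutions S0 p /\ map p Z = w.
Proof.
move=> H.
have H0 : good S0 Z w 0 (fun _ => 1%g).
  move=> F HF; have [p [Hp Hw]] := H F HF; by exists p.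
pose p := fun v => seqf S0 Z w (pickle v).+1 v.
have key : forall s : seq (var n), forall v, v \in s ->
    p v = seqf S0 Z w (bnd s) v.
  move=> s v Hv; rewrite /p.
  have Hb := bndP Hv.
  rewrite -(subnKC Hb) seqf_agree //.
have HG k := (seqf_spec H0 k).1.
exists p; split.
  move=> t Ht.
  have HF1 : forall t', inseq t' [:: t] -> S0 t' by move=> t' [<-|[]].
  have [p' [Hp' [_ Hpre]]] := HG (bnd (vars t)) [:: t] HF1.
  rewrite (eval_ext (p' := p')); first by apply: Hp'; left.
  move=> v Hv; rewrite (key _ _ Hv) Hpre //; exact: bndP.
have [p' [_ [Hw Hpre]]] := HG (bnd Z) [::] (fun t' (F : False) => match F with end).
rewrite -Hw; apply/agree_map => z /inseq_mem Hz.
by rewrite (key _ _ Hz) Hpre //; apply: bndP.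
Qed.

Theorem lemma3 (gT : finGroupType) (n : nat) (S0 : system gT n)
    (Z : seq (var n)) :
  exists S1 : seq (term gT n),
    (forall t, inseq t S1 -> S0 t) /\
    Z_equivalent (fun z => inseq z Z) (fun t => inseq t S1) S0.
Proof.
have Hall : forall l : seq ((size Z).-tuple gT), exists F : seq (term gT n),
   (forall t, inseq t F -> S0 t) /\ forall w, w \in l ->
    (exists p, solutions S0 p /\ map p Z = val w) \/
    (forall p, solutions (fun t => inseq t F) p -> map p Z <> val w).
  elim=> [|w l [F [HF HFb]]]; first by exists [::]; split.
  case: (classic (exists p, solutions S0 p /\ map p Z = val w)) => Hw.
    exists F; split=> // w'; rewrite in_cons => /orP [/eqP ->|]; [by left|exact: HFb].
  have [F1 [HF1 HF1b]] : exists F1 : seq (term gT n), (forall t, inseq t F1 -> S0 t) /\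
      forall p, solutions (fun t => inseq t F1) p -> map p Z <> val w.
    apply: NNPP => Hn; apply: Hw; apply: compact => F1 HF1.
    apply: NNPP => Hn2; apply: Hn; exists F1; split=> // p Hp Hpw.
    by apply: Hn2; exists p.
  exists (F1 ++ F); split.
    by move=> t /inseq_cat [/HF1|/HF].
  move=> w'; rewrite in_cons => /orP [/eqP ->|Hw'].
    by right=> p /sol_cat [Hp1 _]; apply: HF1b.
  case: (HFb w' Hw') => [Hx|Hn]; [by left|right].
  by move=> p /sol_cat [_ Hp2]; apply: Hn.
have [F [HF HFb]] := Hall (enum {: (size Z).-tuple gT}).
exists F; split=> // q; split.
  case=> p Hp Hpq.
  have := HFb (map_tuple p (in_tuple Z)); rewrite mem_enum /= => /(_ isT).
  case=> [[p' [Hp' Hw]]|Hn]; last by exfalso; apply: (Hn p Hp).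
  exists p' => //; apply/agree_map; rewrite Hw; exact/agree_map.
case=> p Hp Hpq; exists p => // t Ht; apply: Hp; exact: HF.
Qed.
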